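(* There exists $c\in(0,1)$ such that for all $m,n,k\in\mathbb N$, $$\P\big(\tau^{(m)}_k\le n\big)\le\Big(\frac{n(\log m+1)}{c\,k\,m}\wedge1\Big)^{\frac{ck}{\log m+1}}.$$ Equivalently, for all $m\in\mathbb N$ and $s,t\in(0,\infty)$, $\P\big(\tau^{(m)}_{\lfloor s(\log m+1)\rfloor}\le tm\big)\le e^{-cs\log^+(\frac{cs}{t})}$.
   Context: Positive reals $r(n)=\frac an(1+o(1))$, $a\in(0,\infty)$, $R_m=\sum_{n\le m}r(n)$; $(T^{(m)}_i)$ i.i.d. with $\P(T^{(m)}_i=n)=\frac{r(n)}{R_m}\mathbf1_{\{1,\dots,m\}}(n)$; $\tau^{(m)}_k=\sum_{i\le k}T^{(m)}_i$. $\log^+x=\max(\log x,0)$. *)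

(* Defs.v *)
From Stdlib Require Import Reals Lra Lia Arith.
Open Scope R_scope.

Fixpoint sum_1_to (f : nat -> R) (m : nat) : R :=
  match m with
  | O => 0
  | S p => sum_1_to f p + f (S p)
  end.

Definition Rm (r : nat -> R) (m : nat) : R := sum_1_to r m.

(* law of T^(m): P(T = i) = r(i)/R_m for i in {1,..,m} *)
Definition pmf (r : nat -> R) (m i : nat) : R := r i / Rm r m.

(* tau_cdf r m k n = P(tau^(m)_k <= n), where tau^(m)_k = T_1+...+T_k
   with T_i i.i.d. of law pmf r m.  Computed by conditioning on T_1:
   P(tau_0 <= n) = 1 ;  P(tau_{k+1} <= n) = sum_{i=1}^m P(T=i) P(tau_k <= n-i)
   (terms with i > n vanish since tau_k >= 0). *)
Fixpoint tau_cdf (r : nat -> R) (m k n : nat) : R :=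
  match k with
  | O => 1
  | S k' => sum_1_to (fun i => if (i <=? n)%nat
                               then pmf r m i * tau_cdf r m k' (n - i)
                               else 0) m
  end.

(* Main.v *)
Require Import Defs.
From Stdlib Require Import Reals Lra Lia ZArith.
Open Scope R_scope.

Lemma sum_ext f g m : (forall i, (1 <= i <= m)%nat -> f i = g i) ->
  sum_1_to f m = sum_1_to g m.
Proof.
  induction m; intros H; simpl; auto.
  rewrite IHm by (intros; apply H; lia). rewrite (H (S m)) by lia. reflexivity.
Qed.

Lemma sum_le f g m : (forall i, (1 <= i <= m)%nat -> f i <= g i) ->
  sum_1_to f m <= sum_1_to g m.
Proof.
  induction m; intros H; simpl; [lra|].
  assert (sum_1_to f m <= sum_1_to g m) by (apply IHm; intros; apply H; lia).
  assert (f (S m) <= g (S m)) by (apply H; lia). lra.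
Qed.

Lemma sum_scal c f m : sum_1_to (fun i => c * f i) m = c * sum_1_to f m.
Proof. induction m; simpl; [ring|]. rewrite IHm; ring. Qed.

Lemma sum_plus f g m : sum_1_to (fun i => f i + g i) m = sum_1_to f m + sum_1_to g m.
Proof. induction m; simpl; [ring|]. rewrite IHm; ring. Qed.

Lemma sum_minus f g m : sum_1_to (fun i => f i - g i) m = sum_1_to f m - sum_1_to g m.
Proof. induction m; simpl; [ring|]. rewrite IHm; ring. Qed.

Lemma sum_nonneg f m : (forall i, (1 <= i <= m)%nat -> 0 <= f i) -> 0 <= sum_1_to f m.
Proof.
  intros H. replace 0 with (sum_1_to (fun _ => 0) m).
  - apply sum_le; auto.
  - induction m; simpl; auto. rewrite IHm; [ring|]. intros; apply H; lia.
Qed.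

Lemma sum_const c m : sum_1_to (fun _ => c) m = INR m * c.
Proof. induction m; simpl sum_1_to; [simpl; ring|]. rewrite IHm, S_INR; ring. Qed.

Section T.
Variable r : nat -> R.
Variable m : nat.
Hypothesis hpos : forall n : nat, (1 <= n)%nat -> 0 < r n.
Hypothesis hm : (1 <= m)%nat.

Lemma Rm_pos : 0 < Rm r m.
Proof.
  unfold Rm. destruct m as [|p]; [lia|]. simpl.
  assert (0 <= sum_1_to r p) by (apply sum_nonneg; intros; left; apply hpos; lia).
  assert (0 < r (S p)) by (apply hpos; lia). lra.
Qed.

Lemma pmf_nonneg i : (1 <= i)%nat -> 0 <= pmf r m i.
Proof. intros; unfold pmf. apply Rle_mult_inv_pos; [left; apply hpos; auto|apply Rm_pos]. Qed.

Lemma pmf_sum : sum_1_to (pmf r m) m = 1.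
Proof.
  unfold pmf. rewrite (sum_ext _ (fun i => / Rm r m * r i)).
  - rewrite sum_scal. fold (Rm r m). field. apply Rgt_not_eq, Rm_pos.
  - intros; unfold Rdiv; ring.
Qed.

Lemma tau_bounds k n : 0 <= tau_cdf r m k n <= 1.
Proof.
  revert n; induction k; intros n; simpl; [lra|].
  split.
  - apply sum_nonneg; intros i Hi. destruct (i <=? n)%nat; [|lra].
    apply Rmult_le_pos; [apply pmf_nonneg; lia| apply IHk].
  - rewrite <- pmf_sum. apply sum_le; intros i Hi.
    assert (0 <= pmf r m i) by (apply pmf_nonneg; lia).
    destruct (i <=? n)%nat; [|lra].
    destruct (IHk (n - i)%nat). rewrite <- (Rmult_1_r (pmf r m i)) at 2.
    apply Rmult_le_compat_l; auto.
Qed.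

Lemma tau_zero k n : (n < k)%nat -> tau_cdf r m k n = 0.
Proof.
  revert n; induction k; intros n Hk; [lia|]. simpl.
  rewrite (sum_ext _ (fun _ => 0)).
  - rewrite sum_const; ring.
  - intros i Hi. destruct (Nat.leb_spec i n); [|auto].
    rewrite IHk by lia. ring.
Qed.

Definition phi (l : R) := sum_1_to (fun i => pmf r m i * exp (- l * INR i)) m.

Lemma phi_nonneg l : 0 <= phi l.
Proof.
  apply sum_nonneg; intros. apply Rmult_le_pos; [apply pmf_nonneg; lia|left; apply exp_pos].
Qed.

Lemma chernoff l k n : 0 <= l -> tau_cdf r m k n <= exp (l * INR n) * phi l ^ k.
Proof.
  intros Hl. revert n; induction k; intros n.
  - simpl. rewrite Rmult_1_r. pose proof (exp_ineq1_le (l * INR n)). pose proof (pos_INR n). pose proof (Rmult_le_pos _ _ Hl H0). lra.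
  - simpl tau_cdf.
    apply Rle_trans with (sum_1_to (fun i => pmf r m i * exp (- l * INR i)) m * (exp (l * INR n) * phi l ^ k)).
    + rewrite Rmult_comm, <- sum_scal. apply sum_le; intros i Hi.
      assert (0 <= pmf r m i) by (apply pmf_nonneg; lia).
      destruct (Nat.leb_spec i n).
      * rewrite <- Rmult_assoc.
        replace (exp (l * INR n) * phi l ^ k * pmf r m i * exp (- l * INR i))
          with (pmf r m i * (exp (l * INR (n - i)) * phi l ^ k)).
        -- apply Rmult_le_compat_l; auto.
        -- rewrite minus_INR by auto.
           replace (l * (INR n - INR i)) with (l * INR n + - l * INR i) by ring.
           rewrite exp_plus; ring.
      * apply Rmult_le_pos; [apply Rmult_le_pos; [left; apply exp_pos| apply pow_le, phi_nonneg]|].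
        apply Rmult_le_pos; auto. left; apply exp_pos.
    + fold (phi l). simpl. lra.
Qed.

Lemma phi_le l : phi l <= exp (- sum_1_to (fun i => pmf r m i * (1 - exp (- l * INR i))) m).
Proof.
  assert (phi l = 1 - sum_1_to (fun i => pmf r m i * (1 - exp (- l * INR i))) m).
  { unfold phi. rewrite <- pmf_sum at 1. rewrite <- sum_minus. apply sum_ext; intros; ring. }
  rewrite H. pose proof (exp_ineq1_le (- sum_1_to (fun i => pmf r m i * (1 - exp (- l * INR i))) m)). lra.
Qed.

End T.

Lemma ln_le' x y : 0 < x -> x <= y -> ln x <= ln y.
Proof. intros H [H1|H1]; [left; apply ln_increasing; auto| subst; lra]. Qed.

Lemma exp_le' x y : x <= y -> exp x <= exp y.
Proof. intros [H1|H1]; [left; apply exp_increasing; auto| subst; lra]. Qed.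

Lemma exp_pow x k : exp x ^ k = exp (INR k * x).
Proof.
  induction k; simpl pow. simpl; rewrite Rmult_0_l, exp_0; auto.
  rewrite IHk, S_INR, <- exp_plus. f_equal; ring.
Qed.

Lemma ln_diff_le a b : 0 < a -> 0 < b -> ln b - ln a <= b / a - 1.
Proof.
  intros Ha Hb. pose proof (exp_ineq1_le (ln b - ln a)).
  unfold Rminus in *. rewrite exp_plus, exp_Ropp, !exp_ln in H by auto.
  unfold Rdiv. lra.
Qed.

Lemma sum_S f m : sum_1_to f (S m) = sum_1_to f m + f (S m).
Proof. reflexivity. Qed.

Definition H m := sum_1_to (fun i => / INR i) m.

Lemma H_upper m : (1 <= m)%nat -> H m <= 1 + ln (INR m).
Proof.
  induction m; intros Hm; [lia|].
  destruct (Nat.eq_dec m 0) as [->|Hm0].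
  - unfold H; simpl. rewrite ln_1. lra.
  - assert (Hp : 0 < INR m) by (apply lt_0_INR; lia).
    unfold H in *. rewrite !sum_S. rewrite S_INR.
    pose proof (IHm ltac:(lia)).
    pose proof (ln_diff_le (INR m + 1) (INR m) ltac:(lra) Hp).
    assert (INR m / (INR m + 1) - 1 = - / (INR m + 1)) by (field; lra). lra.
Qed.

Lemma H_diff j m : (j <= m)%nat -> ln (INR m + 1) - ln (INR j + 1) <= H m - H j.
Proof.
  induction m; intros Hj.
  - replace j with 0%nat by lia. lra.
  - destruct (Nat.eq_dec j (S m)) as [->|Hne]; [lra|].
    pose proof (IHm ltac:(lia)). unfold H in *. rewrite !sum_S. rewrite S_INR.
    pose proof (pos_INR m).
    pose proof (ln_diff_le (INR m + 1) (INR m + 1 + 1) ltac:(lra) ltac:(lra)).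
    assert ((INR m + 1 + 1) / (INR m + 1) - 1 = / (INR m + 1)) by (field; lra). lra.
Qed.

Lemma sum_g l j m : (j <= m)%nat ->
  sum_1_to (fun i => if (i <=? j)%nat then l else / INR i) m = INR j * l + (H m - H j).
Proof.
  induction m; intros Hj.
  - replace j with 0%nat by lia. simpl. unfold H; simpl; ring.
  - destruct (Nat.eq_dec j (S m)) as [->|Hne].
    + rewrite (sum_ext _ (fun _ => l)). rewrite sum_const; ring.
      intros i Hi. destruct (Nat.leb_spec i (S m)); auto; lia.
    + rewrite !sum_S. rewrite IHm by lia. destruct (Nat.leb_spec (S m) j); [lia|].
      unfold H; rewrite !sum_S. ring.
Qed.

Lemma floor_nat x : 0 <= x -> exists j : nat, INR j <= x < INR j + 1.
Proof.
  intros Hx. destruct (base_Int_part x) as [H1 H2].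
  assert (Hz : (0 <= Int_part x)%Z).
  { destruct (Z_lt_le_dec (Int_part x) 0); auto.
    assert (Hm1 : (Int_part x <= -1)%Z) by lia. apply IZR_le in Hm1. lra. }
  exists (Z.to_nat (Int_part x)). rewrite INR_IZR_INZ, Z2Nat.id by auto. lra.
Qed.

Lemma finite_consts r N : (forall n : nat, (1 <= n)%nat -> 0 < r n) ->
  exists A B, 0 < B /\ forall n, (1 <= n <= N)%nat -> B <= INR n * r n <= A.
Proof.
  intros hpos. induction N.
  - exists 1, 1. split; [lra|]. intros; lia.
  - destruct IHN as [A [B [HB HAB]]].
    assert (0 < INR (S N) * r (S N)) by (apply Rmult_lt_0_compat; [apply lt_0_INR; lia|apply hpos; lia]).
    exists (Rmax A (INR (S N) * r (S N))), (Rmin B (INR (S N) * r (S N))).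
    split; [apply Rmin_glb_lt; auto|].
    intros n Hn. destruct (Nat.eq_dec n (S N)) as [->|].
    + split; [apply Rmin_r|apply Rmax_r].
    + destruct (HAB n ltac:(lia)). split.
      * eapply Rle_trans; [apply Rmin_l|auto].
      * eapply Rle_trans; [eauto|apply Rmax_l].
Qed.

Lemma consts r a : 0 < a -> (forall n : nat, (1 <= n)%nat -> 0 < r n) ->
  Un_cv (fun n : nat => INR n * r n) a ->
  exists A B, 0 < B /\ B <= A /\ forall n, (1 <= n)%nat -> B <= INR n * r n <= A.
Proof.
  intros ha hpos hcv. destruct (hcv (a/2) ltac:(lra)) as [N HN].
  destruct (finite_consts r N hpos) as [A [B [HB HAB]]].
  exists (Rmax A (3*a/2)), (Rmin B (a/2)). split; [apply Rmin_glb_lt; lra|]. split.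
  - eapply Rle_trans; [apply Rmin_r|]. eapply Rle_trans; [|apply Rmax_r]. lra.
  - intros n Hn. destruct (le_lt_dec n N).
    + destruct (HAB n ltac:(lia)). split.
      * eapply Rle_trans; [apply Rmin_l|auto].
      * eapply Rle_trans; [eauto|apply Rmax_l].
    + specialize (HN n ltac:(lia)). unfold R_dist in HN.
      apply Rabs_def2 in HN. split.
      * eapply Rle_trans; [apply Rmin_r|lra].
      * eapply Rle_trans; [|apply Rmax_r]; lra.
Qed.

Lemma one_minus_exp y : 0 <= y -> y / (1 + y) <= 1 - exp (- y).
Proof.
  intros Hy. pose proof (exp_ineq1_le y). pose proof (exp_pos y).
  rewrite exp_Ropp.
  assert (/ exp y <= / (1 + y)) by (apply Rinv_le_contravar; lra).
  assert (y / (1 + y) = 1 - / (1 + y)) by (field; lra). lra.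
Qed.

Lemma tb ri i Rm A B L l g : 0 < i -> 0 < Rm -> Rm <= A * L -> 0 < A -> 0 < L ->
  B <= i * ri -> 0 < B -> 0 < l -> g <= 2 * l / (1 + l * i) ->
  B / (2 * A * L) * g <= ri / Rm * (1 - exp (- l * i)).
Proof.
  intros Hi HR HRA HA HL HB HB0 Hl Hg.
  assert (Hri : 0 < ri) by (apply (Rmult_lt_reg_l i); lra).
  assert (E1 : l * i / (1 + l * i) <= 1 - exp (- l * i)).
  { replace (- l * i) with (- (l * i)) by ring. apply one_minus_exp. nra. }
  assert (E2 : ri / (A * L) <= ri / Rm).
  { unfold Rdiv. apply Rmult_le_compat_l; [lra|]. apply Rinv_le_contravar; auto. }
  assert (E3 : B / (i * (A * L)) <= ri / (A * L)).
  { unfold Rdiv. rewrite Rinv_mult. rewrite <- Rmult_assoc. apply Rmult_le_compat_r.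
    - left; apply Rinv_0_lt_compat; nra.
    - apply (Rmult_le_reg_l i); auto. field_simplify; lra. }
  assert (P1 : 0 <= l * i / (1 + l * i)) by (apply Rle_mult_inv_pos; nra).
  assert (ri / Rm * (1 - exp (- l * i)) >= B / (i * (A * L)) * (l * i / (1 + l * i))).
  { apply Rle_ge. apply Rmult_le_compat; auto.
    - apply Rle_mult_inv_pos; [lra|]. nra.
    - lra. }
  assert (B / (i * (A * L)) * (l * i / (1 + l * i)) = B / (2 * A * L) * (2 * l / (1 + l * i))).
  { field. nra. }
  assert (B / (2 * A * L) * g <= B / (2 * A * L) * (2 * l / (1 + l * i))).
  { apply Rmult_le_compat_l; [|auto]. left. apply Rmult_lt_0_compat; [lra|]. apply Rinv_0_lt_compat; nra. }
  lra.
Qed.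

Theorem mainTheorem15 (r : nat -> R) (a : R) (ha : 0 < a)
  (hpos : forall n : nat, (1 <= n)%nat -> 0 < r n)
  (hasym : Un_cv (fun n : nat => INR n * r n) a) :
  exists c : R, 0 < c < 1 /\
    forall m n k : nat, (1 <= m)%nat -> (1 <= n)%nat -> (1 <= k)%nat ->
      tau_cdf r m k n <=
      Rpower (Rmin (INR n * (ln (INR m) + 1) / (c * INR k * INR m)) 1)
             (c * INR k / (ln (INR m) + 1)).
Proof.
  destruct (consts r a ha hpos hasym) as [A [B [HB [HBA HAB]]]].
  assert (HA : 0 < A) by lra.
  exists (B / (12 * A)).
  assert (Hc0 : 0 < B / (12 * A)) by (apply Rdiv_lt_0_compat; lra).
  assert (Hc1 : B / (12 * A) <= 1 / 12).
  { apply (Rmult_le_reg_l (12 * A)); [lra|]. field_simplify; lra. }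
  split; [lra|].
  set (c := B / (12 * A)) in *.
  intros m n k hm hn hk.
  assert (Hm1 : 1 <= INR m) by (apply (le_INR 1 m); lia).
  assert (Hn1 : 1 <= INR n) by (apply (le_INR 1 n); lia).
  assert (Hk1 : 1 <= INR k) by (apply (le_INR 1 k); lia).
  assert (HL : 1 <= ln (INR m) + 1).
  { pose proof (E0 := ln_le' 1 (INR m) ltac:(lra) Hm1). rewrite ln_1 in E0. lra. }
  set (L := ln (INR m) + 1) in *.
  destruct (le_lt_dec k n) as [Hkn|Hkn].
  2:{ rewrite tau_zero by auto. unfold Rpower. left; apply exp_pos. }
  assert (Hkn' : INR k <= INR n) by (apply le_INR; auto).
  set (x := INR n * L / (c * INR k)).
  set (Q := INR n * L / (c * INR k * INR m)).
  assert (HQx : Q = x / INR m) by (unfold Q, x; field; split; lra).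
  assert (Hx1 : 1 <= x).
  { assert (Ex : x * (c * INR k) = INR n * L) by (unfold x; field; lra).
    destruct (Rlt_le_dec x 1) as [Hlt|]; auto.
    assert (x * (c * INR k) < 1 * (c * INR k)) by (apply Rmult_lt_compat_r; nra). nra. }
  destruct (Rlt_le_dec Q 1) as [HQ1|HQ1].
  2:{ rewrite Rmin_right by lra. unfold Rpower. rewrite ln_1, Rmult_0_r, exp_0.
      apply tau_bounds; auto. }
  rewrite Rmin_left by lra. unfold Rpower.
  assert (HQ0 : 0 < Q) by (rewrite HQx; apply Rdiv_lt_0_compat; lra).
  assert (Hxm : x < INR m).
  { assert (x = Q * INR m) by (rewrite HQx; field; lra). nra. }
  destruct (floor_nat x ltac:(lra)) as [j [Hj1 Hj2]].
  assert (Hj0 : (1 <= j)%nat).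
  { destruct j; [simpl in Hj2; lra|lia]. }
  assert (HjR : 1 <= INR j) by (apply (le_INR 1 j); auto).
  assert (Hjm : (j <= m)%nat) by (apply Nat.lt_le_incl, INR_lt; lra).
  set (l := / x).
  assert (Hl0 : 0 < l) by (apply Rinv_0_lt_compat; lra).
  set (s := sum_1_to (fun i => pmf r m i * (1 - exp (- l * INR i))) m).
  assert (HRm : Rm r m <= A * L).
  { unfold Rm. apply Rle_trans with (sum_1_to (fun i => A * / INR i) m).
    - apply sum_le; intros i Hi. assert (0 < INR i) by (apply lt_0_INR; lia).
      destruct (HAB i ltac:(lia)). apply (Rmult_le_reg_l (INR i)); auto.
      field_simplify; lra.
    - rewrite sum_scal. fold (H m). pose proof (H_upper m hm).
      apply Rmult_le_compat_l; unfold L; lra. }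
  assert (HRm0 : 0 < Rm r m) by (apply Rm_pos; auto).
  assert (Hs1 : B / (2 * A * L) * (INR j * l + (H m - H j)) <= s).
  { rewrite <- (sum_g l j m Hjm), <- sum_scal. unfold s. apply sum_le; intros i Hi.
    assert (Hi0 : 0 < INR i) by (apply lt_0_INR; lia).
    unfold pmf. apply tb; auto; try lra.
    - apply HAB; lia.
    - destruct (Nat.leb_spec i j).
      + assert (INR i <= INR j) by (apply le_INR; auto).
        assert (l * INR i <= 1).
        { unfold l. apply (Rmult_le_reg_l x); [lra|]. field_simplify; lra. }
        apply (Rmult_le_reg_r (1 + l * INR i)); [nra|]. field_simplify; nra.
      + assert (INR j + 1 <= INR i) by (rewrite <- S_INR; apply le_INR; lia).
        assert (1 <= l * INR i).
        { unfold l. apply (Rmult_le_reg_l x); [lra|]. field_simplify; lra. }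
        apply (Rmult_le_reg_r (1 + l * INR i)); [nra|].
        unfold Rdiv. rewrite Rmult_assoc, Rinv_l by lra.
        field_simplify; [|lra]. replace ((INR i * l + 1) / INR i) with (l + / INR i) by (field; lra). assert (/ INR i <= l) by (apply (Rmult_le_reg_l (INR i)); [lra|]; rewrite Rinv_r by lra; lra). lra. }
  assert (HG1 : 1 / 2 <= INR j * l).
  { unfold l. apply (Rmult_le_reg_l (2 * x)); [lra|]. field_simplify; lra. }
  assert (Hd := H_diff j m Hjm).
  assert (Hd0 : 0 <= ln (INR m + 1) - ln (INR j + 1)).
  { pose proof (ln_le' (INR j + 1) (INR m + 1) ltac:(lra) ltac:(assert (INR j <= INR m) by (apply le_INR; auto); lra)). lra. }
  assert (Hln2 : ln 2 < 1).
  { rewrite <- (ln_exp 1). apply ln_increasing; [lra|]. pose proof (exp_ineq1 1 ltac:(lra)). lra. }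
  assert (HlnQ : ln Q < 0) by (rewrite <- ln_1; apply ln_increasing; lra).
  assert (Hd1 : ln (INR m) - ln 2 - ln Q - ln (INR m) <= ln (INR m + 1) - ln (INR j + 1)).
  { pose proof (ln_le' (INR m) (INR m + 1) ltac:(lra) ltac:(lra)).
    pose proof (ln_le' (INR j + 1) (2 * x) ltac:(lra) ltac:(lra)).
    assert (ln (2 * x) = ln 2 + ln Q + ln (INR m)).
    { assert (E2 : 2 * x = 2 * (Q * INR m)) by (rewrite HQx; field; lra).
      rewrite E2, !ln_mult by lra. ring. }
    lra. }
  assert (HG : (1 - ln Q) / 6 <= INR j * l + (H m - H j)) by lra.
  assert (Hs : c / L * (1 - ln Q) <= s).
  { eapply Rle_trans; [|apply Hs1].
    replace (c / L * (1 - ln Q)) with (B / (2 * A * L) * ((1 - ln Q) / 6)) by (unfold c; field; lra).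
    apply Rmult_le_compat_l; auto. left. apply Rdiv_lt_0_compat; lra. }
  eapply Rle_trans; [apply (chernoff r m hpos hm l k n); lra|].
  eapply Rle_trans.
  { apply Rmult_le_compat_l; [left; apply exp_pos|].
    apply pow_incr. split; [apply phi_nonneg; auto| apply phi_le; auto]. }
  fold s. rewrite exp_pow, <- exp_plus. apply exp_le'.
  assert (l * INR n = c * INR k / L) by (unfold l, x; field; split; lra).
  assert (INR k * (c / L * (1 - ln Q)) <= INR k * s) by (apply Rmult_le_compat_l; lra).
  assert (c * INR k / L * ln Q = c * INR k / L - INR k * (c / L * (1 - ln Q))) by (field; lra).
  lra.
Qed.
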